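(* Let $C_1,C_2$ be compatible counting-star formulas and let $E\wedge H$ be a derivation result of $S_{\{1\}}(C_1)*S_{\{2\}}(C_2)$. Then $E\wedge H\Rightarrow S_{\{1\}}(C_1)*S_{\{2\}}(C_2)$ is valid (true in every $L'$-environment).
   Context: BASE. Fix a finite vocabulary $L=\mathcal A\cup\mathcal F$ ($\mathcal A$ unary, $\mathcal F$ binary predicate symbols); equality is a logical symbol not in $\mathcal F$, always interpreted as identity. Formulas: first-order logic with equality, counting quantifiers $\exists^{\ge k}x.G$, $\exists^{=k}x.G$, and spatial conjunction $*$. An environment has a finite nonempty domain $D$, interpretations of the predicate symbols, and an assignment to variables. $\mathrm{split}\,e\,[e_1,\dots,e_r]$ (same domain, same variable assignment) holds iff for each predicate symbol $P$, $e(P)$ is the disjoint union of the $e_i(P)$; $[\![G_1*G_2]\!]e$ holds iff some $e_1,e_2$ with $\mathrm{split}\,e\,[e_1,e_2]$ satisfy $[\![G_1]\!]e_1$, $[\![G_2]\!]e_2$. $G\sim H$ means equal truth values in all environments. NORMAL FORMS. Atoms over distinct variables $u_1,\dots,u_p$ are $A(u_i)$, $f(u_i,u_j)$, $u_i=u_j$; a GCCAT formula over them contains for each such atom exactly one of the atom or its negation (nothing else), with $u_i=u_j$ positive iff $i=j$. Fix distinct $x_1,\dots,x_n$ and $x$. $\mathrm{ext}(x_1,\dots,x_n;x)$ is the set of conjunctions containing, for each atom over $x,x_1,\dots,x_n$ containing $x$, exactly one of the atom or its negation, with $x=x$ positive and $x=x_i$, $x_i=x$ negated. For $p\ge1$,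 $C_p=\{0,\dots,p-1,p^+\}$; $\exists^{c}x.G$ means $\exists^{=c}x.G$ for integer $c$ and $\exists^{\ge p}x.G$ for $c=p^+$. A counting-star formula is $C=E\wedge F\wedge\bigwedge_{i=1}^{k}\exists^{s_i}x.F'_i$ with $E=\bigwedge_{j=1}^m y_j=x_{i_j}$ ($y_j$ distinct variables not among $x,x_1,\dots,x_n$), $F$ GCCAT over $x_1,\dots,x_n$, $F'_1,\dots,F'_k$ an enumeration of $\mathrm{ext}(x_1,\dots,x_n;x)$, $s_i\in C_q$ for some $q\ge2$. Two counting-star formulas are compatible if they have the same equality part $E$ and GCCAT parts $F_1,F_2$ over the same $x_1,\dots,x_n$. OPERATIONS. $\mathrm{Pos}(T)$ is the set of non-equality positive literals of a conjunction $T$. For $T_1,T_2\in\mathrm{ext}(x_1,\dots,x_n;x)$, $T_1\oplus T_2$ is defined iff $\mathrm{Pos}(T_1)\cap\mathrm{Pos}(T_2)=\emptyset$ and is the unique $T\in\mathrm{ext}$ with $\mathrm{Pos}(T)=\mathrm{Pos}(T_1)\cup\mathrm{Pos}(T_2)$; for GCCAT $F_1,F_2$ over $x_1,\dots,x_n$, $F_1\otimes F_2$ is defined iff $\mathrm{Pos}(F_1)\cap\mathrm{Pos}(F_2)=\emptyset$ and is the unique GCCAT $F$ over $x_1,\dots,x_n$ with $\mathrm{Pos}(F)=\mathrm{Pos}(F_1)\cup\mathrm{Pos}(F_2)$. TRANSLATION. $L'=L\cup\{B_1,B_2\}$ (new unary symbols, split by $*$ like all others). $\mathrm{Mark}_\emptyset(x)=\neg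 B_1(x)\wedge\neg B_2(x)$, $\mathrm{Mark}_{\{1\}}(x)=B_1(x)\wedge\neg B_2(x)$, $\mathrm{Mark}_{\{2\}}(x)=\neg B_1(x)\wedge B_2(x)$, $\mathrm{Mark}_{\{1,2\}}(x)=B_1(x)\wedge B_2(x)$. $\mathcal E_0$: GCCAT over $x_1,\dots,x_n$ whose only positive literals are $x_i=x_i$; $\varnothing_x$: element of $\mathrm{ext}$ whose only positive literal is $x=x$; $\delta(x):=\bigwedge_i x\ne x_i$. $G_E:=\mathcal E_0\wedge\forall x.(\delta(x)\to\varnothing_x\wedge\mathrm{Mark}_\emptyset(x))$; $K(F):=F\wedge\forall x.(\delta(x)\to\varnothing_x\wedge\mathrm{Mark}_\emptyset(x))$; $\mathrm{Any}_m(T):=\mathcal E_0\wedge\forall x.(\delta(x)\to(T\wedge\mathrm{Mark}_m(x))\vee(\varnothing_x\wedge\mathrm{Mark}_\emptyset(x)))$; $\mathrm{One}_m(T):=\mathrm{Any}_m(T)\wedge\exists^{=1}x.(\delta(x)\wedge T\wedge\mathrm{Mark}_m(x))$. $X_m(\exists^{0}x.T):=G_E$, $X_m(\exists^{i+1}x.T):=\mathrm{One}_m(T)*X_m(\exists^{i}x.T)$, $X_m(\exists^{p^+}x.T):=X_m(\exists^{p}x.T)*\mathrm{Any}_m(T)$. $S_m(C):=E\wedge\big(K(F)*X_m(\exists^{s_1}x.F'_1)*\dots*X_m(\exists^{s_k}x.F'_k)\big)$. RULES (when $T_1\oplus T_2$ is defined): (1) $\mathrm{One}_{\{1\}}(T_1)*\mathrm{One}_{\{2\}}(T_2)\to\mathrm{One}_{\{1,2\}}(T_1\oplus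 T_2)$; (2) $\mathrm{One}_{\{1\}}(T_1)*\mathrm{Any}_{\{2\}}(T_2)\to\mathrm{One}_{\{1,2\}}(T_1\oplus T_2)*\mathrm{Any}_{\{2\}}(T_2)$; (3) $\mathrm{Any}_{\{1\}}(T_1)*\mathrm{One}_{\{2\}}(T_2)\to\mathrm{Any}_{\{1\}}(T_1)*\mathrm{One}_{\{1,2\}}(T_1\oplus T_2)$; (4) $\mathrm{Any}_{\{1\}}(T_1)*\mathrm{Any}_{\{2\}}(T_2)\to\mathrm{Any}_{\{1\}}(T_1)*\mathrm{Any}_{\{2\}}(T_2)*\mathrm{Any}_{\{1,2\}}(T_1\oplus T_2)$; (5) $\mathrm{Any}_{\{1\}}(T)\to G_E$; (6) $\mathrm{Any}_{\{2\}}(T)\to G_E$. DERIVATION. For compatible $C_1=E\wedge F_1\wedge\dots$, $C_2=E\wedge F_2\wedge\dots$, write $S_{\{1\}}(C_1)*S_{\{2\}}(C_2)$ as $E\wedge W$ where $W$ is the spatial conjunction of $K(F_1)$, $K(F_2)$ and all the (unfolded) $\mathrm{One}_m$, $\mathrm{Any}_m$, $G_E$ conjuncts of the $X_{\{1\}}$ and $X_{\{2\}}$ parts. $E\wedge H$ is a derivation result if $H$ is obtained from $W$ by: first replacing $K(F_1)*K(F_2)$ by $K(F_1\otimes F_2)$ if defined, and by $\mathit{false}$ otherwise; then applying finitely many rule instances of (1)–(6), each replacing a spatial sub-conjunction matching a rule's left side by its right side, working modulo associativity and commutativity of $*$, the unit law $G*G_E\sim G$ and idempotence $\mathrm{Any}_m(T)*\mathrm{Any}_m(T)\sim\mathrm{Any}_m(T)$,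 with all applications of (1)–(4) preceding those of (5)–(6); and such that in the end, apart from the $K$-conjunct, $H$ contains only conjuncts of the forms $\mathrm{One}_{\{1,2\}}(T)$ and $\mathrm{Any}_{\{1,2\}}(T)$. *)

(* Defs.v *)
From mathcomp Require Import all_boot.

Set Implicit Arguments.
Unset Strict Implicit.
Unset Printing Implicit Defensive.

Inductive form (U Bn : Type) : Type :=
| FTrue | FFalse
| FU (a : U) (v : nat)
| FB (f : Bn) (v w : nat)
| FEq (v w : nat)
| FNot (g : form U Bn)
| FAnd (g h : form U Bn)
| FOr (g h : form U Bn)
| FImp (g h : form U Bn)
| FEx (v : nat) (g : form U Bn)
| FAll (v : nat) (g : form U Bn)
| FCntGe (k : nat) (v : nat) (g : form U Bn)
| FCntEq (k : nat) (v : nat) (g : form U Bn)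
| FStar (g h : form U Bn).

Arguments FTrue {U Bn}.
Arguments FFalse {U Bn}.
Arguments FU {U Bn} a v.
Arguments FB {U Bn} f v w.
Arguments FEq {U Bn} v w.
Arguments FNot {U Bn} g.
Arguments FAnd {U Bn} g h.
Arguments FOr {U Bn} g h.
Arguments FImp {U Bn} g h.
Arguments FEx {U Bn} v g.
Arguments FAll {U Bn} v g.
Arguments FCntGe {U Bn} k v g.
Arguments FCntEq {U Bn} k v g.
Arguments FStar {U Bn} g h.

Section Semantics.
Variables (U Bn D : finType).

Definition interp : finType :=
  ({ffun (U * D)%type -> bool} * {ffun (Bn * D * D)%type -> bool})%type.

Definition upd (s : nat -> D) (v : nat) (d : D) : nat -> D :=
  fun w => if w == v then d else s w.

Definition split2 (I I1 I2 : interp) : bool :=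
  [forall p, (I.1 p == (I1.1 p || I2.1 p)) && ~~ (I1.1 p && I2.1 p)] &&
  [forall p, (I.2 p == (I1.2 p || I2.2 p)) && ~~ (I1.2 p && I2.2 p)].

Fixpoint sat (I : interp) (s : nat -> D) (G : form U Bn) {struct G} : bool :=
  match G with
  | FTrue => true
  | FFalse => false
  | FU a v => I.1 (a, s v)
  | FB f v w => I.2 (f, s v, s w)
  | FEq v w => s v == s w
  | FNot g => ~~ sat I s g
  | FAnd g h => sat I s g && sat I s h
  | FOr g h => sat I s g || sat I s h
  | FImp g h => sat I s g ==> sat I s h
  | FEx v g => [exists d : D, sat I (upd s v d) g]
  | FAll v g => [forall d : D, sat I (upd s v d) g]
  | FCntGe k v g => k <= #|[set d : D | sat I (upd s v d) g]|
  | FCntEq k v g => #|[set d : D | sat I (upd s v d) g]| == k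
  | FStar g h => [exists I1 : interp, exists I2 : interp,
                    [&& split2 I I1 I2, sat I1 s g & sat I2 s h]]
  end.

End Semantics.

Definition valid (U Bn : finType) (phi : form U Bn) : Prop :=
  forall (D : finType), 0 < #|D| ->
    forall (I : interp U Bn D) (s : nat -> D), sat I s phi.

(* A = unary symbols of L, Bn = binary symbols of L;
   L' has unary symbols A + bool, with B_1 = inr false, B_2 = inr true. *)
Section Translation.
Variables (A Bn : finType) (n : nat) (xs : n.-tuple nat) (x : nat).

Local Notation fm := (form (A + bool) Bn).

Definition gatom : finType := ((A * 'I_n) + (Bn * 'I_n * 'I_n))%type.
(* atoms over x, x_1..x_n containing x, other than equalities:
   A(x) | f(x,x) | f(x,x_i) | f(x_i,x) *)
Definition xatom : finType := (A + (Bn + ((Bn * 'I_n) + (Bn * 'I_n))))%type.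

Definition gatom_form (t : gatom) : fm :=
  match t with
  | inl (a, i) => FU (inl a) (tnth xs i)
  | inr (f, i, j) => FB f (tnth xs i) (tnth xs j)
  end.

Definition xatom_form (t : xatom) : fm :=
  match t with
  | inl a => FU (inl a) x
  | inr (inl f) => FB f x x
  | inr (inr (inl (f, i))) => FB f x (tnth xs i)
  | inr (inr (inr (f, i))) => FB f (tnth xs i) x
  end.

Definition lit (b : bool) (g : fm) : fm := if b then g else FNot g.
Definition bigAnd (l : seq fm) : fm := foldr FAnd FTrue l.

Definition ipair : finType := ('I_n * 'I_n)%type.

(* the GCCAT formula over x_1..x_n whose set of positive non-equality
   literals is P *)
Definition gccat (P : {set gatom}) : fm :=
  bigAnd ([seq lit (t \in P) (gatom_form t) | t <- enum gatom] ++
          [seq lit (ij.1 == ij.2) (FEq (tnth xs ij.1) (tnth xs ij.2))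
          | ij <- enum ipair]).

(* the element of ext(x_1..x_n; x) whose set of positive non-equality
   literals is T *)
Definition extf (T : {set xatom}) : fm :=
  bigAnd ([seq lit (t \in T) (xatom_form t) | t <- enum xatom] ++
          [:: FEq x x] ++
          flatten [seq [:: FNot (FEq x (tnth xs i)); FNot (FEq (tnth xs i) x)]
                  | i <- enum 'I_n]).

(* counting values C_q = {0..q-1, q^+} *)
Inductive cval := CEx of nat | CGe of nat.
Definition in_Cq (q : nat) (c : cval) : bool :=
  match c with CEx k => k < q | CGe p => p == q end.

Definition Eform (E : seq (nat * 'I_n)) : fm :=
  bigAnd [seq FEq p.1 (tnth xs p.2) | p <- E].

Definition delta : fm := bigAnd [seq FNot (FEq x (tnth xs i)) | i <- enum 'I_n].

(* m : bool * bool encodes a subset of {1,2} : (1 \in m, 2 \in m) *)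
Definition Mark (m : bool * bool) : fm :=
  FAnd (lit m.1 (FU (inr false) x)) (lit m.2 (FU (inr true) x)).

Definition E0 : fm := gccat set0.
Definition emptyx : fm := extf set0.

Definition GE : fm :=
  FAnd E0 (FAll x (FImp delta (FAnd emptyx (Mark (false, false))))).
Definition Kf (P : {set gatom}) : fm :=
  FAnd (gccat P) (FAll x (FImp delta (FAnd emptyx (Mark (false, false))))).
Definition Anyf (m : bool * bool) (T : {set xatom}) : fm :=
  FAnd E0 (FAll x (FImp delta (FOr (FAnd (extf T) (Mark m))
                                   (FAnd emptyx (Mark (false, false)))))).
Definition Onef (m : bool * bool) (T : {set xatom}) : fm :=
  FAnd (Anyf m T) (FCntEq 1 x (FAnd delta (FAnd (extf T) (Mark m)))).

Fixpoint Xn (m : bool * bool) (T : {set xatom}) (k : nat) : fm :=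
  match k with
  | 0 => GE
  | k'.+1 => FStar (Onef m T) (Xn m T k')
  end.

Definition Xf (m : bool * bool) (T : {set xatom}) (c : cval) : fm :=
  match c with
  | CEx k => Xn m T k
  | CGe p => FStar (Xn m T p) (Anyf m T)
  end.

(* S_m(C) for C = E /\ F /\ /\_T exists^{s T} x. T *)
Definition Sf (m : bool * bool) (E : seq (nat * 'I_n)) (P : {set gatom})
  (s : {ffun {set xatom} -> cval}) : fm :=
  FAnd (Eform E)
       (foldl FStar (Kf P) [seq Xf m T (s T) | T <- enum {set xatom}]).

(* Derivations.  Spatial conjuncts other than the K-conjunct.          *)
Inductive satom := SOne of (bool * bool) & {set xatom}
                 | SAny of (bool * bool) & {set xatom}
                 | SGE.

Definition satom_form (a : satom) : fm :=
  match a with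
  | SOne m T => Onef m T
  | SAny m T => Anyf m T
  | SGE => GE
  end.

Definition unfoldX (m : bool * bool) (T : {set xatom}) (c : cval) : seq satom :=
  match c with
  | CEx k => nseq k (SOne m T) ++ [:: SGE]
  | CGe p => nseq p (SOne m T) ++ [:: SGE; SAny m T]
  end.

Definition W0 (s1 s2 : {ffun {set xatom} -> cval}) : seq satom :=
  flatten [seq unfoldX (true, false) T (s1 T) | T <- enum {set xatom}] ++
  flatten [seq unfoldX (false, true) T (s2 T) | T <- enum {set xatom}].

(* equivalence moves: commutativity/associativity (adjacent swaps),
   unit law G * G_E ~ G, idempotence Any_m(T) * Any_m(T) ~ Any_m(T) *)
Definition equiv_step (l l' : seq satom) : Prop :=
  (exists l1 a b l2, l = l1 ++ a :: b :: l2 /\ l' = l1 ++ b :: a :: l2) \/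
  l' = SGE :: l \/ l = SGE :: l' \/
  (exists m T r, l = SAny m T :: r /\ l' = SAny m T :: SAny m T :: r) \/
  (exists m T r, l' = SAny m T :: r /\ l = SAny m T :: SAny m T :: r).

Definition m1 : bool * bool := (true, false).
Definition m2 : bool * bool := (false, true).
Definition m12 : bool * bool := (true, true).

(* rules (1)-(4); T1 (+) T2 is defined iff Pos(T1), Pos(T2) are disjoint,
   and then Pos(T1 (+) T2) = Pos(T1) :|: Pos(T2) *)
Definition rule14 (lhs rhs : seq satom) : Prop :=
  exists T1 T2 : {set xatom}, [disjoint T1 & T2] /\
  ((lhs = [:: SOne m1 T1; SOne m2 T2] /\ rhs = [:: SOne m12 (T1 :|: T2)]) \/
   (lhs = [:: SOne m1 T1; SAny m2 T2] /\
      rhs = [:: SOne m12 (T1 :|: T2); SAny m2 T2]) \/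
   (lhs = [:: SAny m1 T1; SOne m2 T2] /\
      rhs = [:: SAny m1 T1; SOne m12 (T1 :|: T2)]) \/
   (lhs = [:: SAny m1 T1; SAny m2 T2] /\
      rhs = [:: SAny m1 T1; SAny m2 T2; SAny m12 (T1 :|: T2)])).

Definition rule56 (lhs rhs : seq satom) : Prop :=
  exists T : {set xatom}, (lhs = [:: SAny m1 T] \/ lhs = [:: SAny m2 T]) /\ rhs = [:: SGE].

Definition rewr (rule : seq satom -> seq satom -> Prop) (l l' : seq satom) :=
  exists lhs rhs r, rule lhs rhs /\ l = lhs ++ r /\ l' = rhs ++ r.

Inductive rtc (R : seq satom -> seq satom -> Prop) : seq satom -> seq satom -> Prop :=
| rtc_refl l : rtc R l l
| rtc_step l1 l2 l3 : R l1 l2 -> rtc R l2 l3 -> rtc R l1 l3.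

Definition is_final (a : satom) : bool :=
  match a with
  | SOne m _ => m == m12
  | SAny m _ => m == m12
  | SGE => false
  end.

Definition otimes (P1 P2 : {set gatom}) : option {set gatom} :=
  if [disjoint P1 & P2] then Some (P1 :|: P2) else None.

Definition derivation_result (E : seq (nat * 'I_n))
  (P1 : {set gatom}) (s1 : {ffun {set xatom} -> cval})
  (P2 : {set gatom}) (s2 : {ffun {set xatom} -> cval}) (R : fm) : Prop :=
  exists W1 W2 : seq satom,
    rtc (fun l l' => equiv_step l l' \/ rewr rule14 l l') (W0 s1 s2) W1 /\
    rtc (fun l l' => equiv_step l l' \/ rewr rule56 l l') W1 W2 /\
    all is_final W2 /\
    R = FAnd (Eform E)
             (foldl (fun acc a => FStar acc (satom_form a))
                    (match otimes P1 P2 with Some P => Kf P | None => FFalse end)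
                    W2).

End Translation.

(* Main.v *)
Require Import Defs.
From mathcomp Require Import all_boot.
Set Implicit Arguments. Unset Strict Implicit. Unset Printing Implicit Defensive.

Lemma all_enum_set (X : finType) (f : pred X) (T : {set X}) :
  all (fun t => f t == (t \in T)) (enum X) = ([set t | f t] == T).
Proof.
apply/allP/eqP.
- move=> H; apply/setP => t; rewrite inE; apply/eqP; apply: H; by rewrite mem_enum.
- by move=> <- t _; rewrite inE.
Qed.

Arguments Mark : simpl never. Arguments extf : simpl never. Arguments delta : simpl never.
Arguments gccat : simpl never. Arguments emptyx : simpl never. Arguments E0 : simpl never.

Lemma foldl_first (U' Bn' D' : finType) (T : Type) (f : T -> form U' Bn') (I : interp U' Bn' D') s0 g l :
  sat I s0 (foldl (fun acc a => FStar acc (f a)) g l) -> exists I' : interp U' Bn' D', sat I' s0 g.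
Proof.
elim: l I g => [|a l IH] I g /=; first by exists I.
move/IH => [I' /existsP [I1 /existsP [I2 /and3P [_ H _]]]]; by exists I1.
Qed.

Lemma foldl_mapF (T S : Type) (f : S -> S -> S) (g : T -> S) z l :
  foldl f z (map g l) = foldl (fun acc a => f acc (g a)) z l.
Proof. by elim: l z => //= a l IH z. Qed.

Section Proof.
Variables (A Bn : finType) (n : nat) (xs : n.-tuple nat) (x : nat).
Variables (D : finType) (s : nat -> D).
Hypothesis hx : x \notin xs.

Local Notation U := (A + bool)%type.
Local Notation fm := (form U Bn).
Local Notation IT := (interp U Bn D).

Lemma bigAndE (I : IT) s' l : sat I s' (bigAnd l) = all (sat I s') l.
Proof. by elim: l => //= g l ->. Qed.

Lemma litE (I : IT) s' b g : sat I s' (lit b g) = (sat I s' g == b).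
Proof. by case: b => /=; case: (sat _ _ _). Qed.


Definition xv (i : 'I_n) : D := s (tnth xs i).
Definition xvals : {set D} := [set xv i | i : 'I_n].

Definition gatomT : finType := gatom A Bn n.
Definition xatomT : finType := xatom A Bn n.
Definition RA : finType := (gatomT + (D * (xatomT + bool)))%type.
Definition rG (g : gatomT) : RA := inl g.
Definition rX d (t : xatomT) : RA := inr (d, inl t).
Definition rB d (b : bool) : RA := inr (d, inr b).

Definition av (I : IT) (p : ((U * D) + (Bn * D * D))%type) : bool :=
  match p with inl p => I.1 p | inr p => I.2 p end.

Definition loc (r : RA) : ((U * D) + (Bn * D * D))%type :=
  match r with
  | inl (inl (a, i)) => inl (inl a, xv i)
  | inl (inr (f, i, j)) => inr (f, xv i, xv j)
  | inr (d, inl (inl a)) => inl (inl a, d)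
  | inr (d, inl (inr (inl f))) => inr (f, d, d)
  | inr (d, inl (inr (inr (inl (f, i))))) => inr (f, d, xv i)
  | inr (d, inl (inr (inr (inr (f, i))))) => inr (f, xv i, d)
  | inr (d, inr b) => inl (inr b, d)
  end.

Definition validr (r : RA) : bool :=
  match r with inl _ => true | inr (d, _) => d \notin xvals end.

Lemma upd_x d : upd s x d x = d.
Proof. by rewrite /upd eqxx. Qed.

Lemma upd_xs d i : upd s x d (tnth xs i) = xv i.
Proof.
rewrite /upd; case: eqP => // E; move: hx; by rewrite -E mem_tnth.
Qed.

Lemma gatomE (I : IT) g : sat I s (gatom_form xs g) = av I (loc (rG g)).
Proof. by case: g => [[a i]|[[f i] j]]. Qed.

Lemma xatomE (I : IT) d t : sat I (upd s x d) (xatom_form xs x t) = av I (loc (rX d t)).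
Proof. by case: t => [a|[f|[[f i]|[f i]]]] /=; rewrite ?upd_x ?upd_xs. Qed.


Lemma gccat_inj (I : IT) P : sat I s (gccat xs P) -> injective xv.
Proof.
rewrite /gccat bigAndE all_cat => /andP [_]; rewrite all_map => /allP H i j E.
have := H (i, j); rewrite mem_enum => /(_ isT) /=; rewrite litE /=.
by rewrite /xv in E; rewrite E eqxx => /eqP /esym /eqP.
Qed.

Section Inj.
Hypothesis hinj : injective xv.

Lemma loc_inj r r' : validr r -> validr r' -> loc r = loc r' -> r = r'.
Proof.
have Hn : forall d i, d \notin xvals -> d = xv i -> False.
  by move=> d i H E; apply: (negP H); rewrite E; apply/imsetP; exists i.
case: r => [[[a i]|[[f i] j]]|[d [[a|[f|[[f i]|[f i]]]]|b]]];
case: r' => [[[a' i']|[[f' i'] j']]|[d' [[a'|[f'|[[f' i']|[f' i']]]]|b']]] //= V V' [];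
repeat (move=> /hinj ? || move=> ?); subst => //; exfalso; 
  first [ by apply: (Hn _ _ V) | by apply: (Hn _ _ V') ].
Qed.

Definition view (I : IT) : {set RA} := [set r | validr r && av I (loc r)].
Definition gp (v : {set RA}) : {set gatomT} := [set g | rG g \in v].
Definition xp (v : {set RA}) d : {set xatomT} := [set t | rX d t \in v].
Definition cell (v : {set RA}) d := (xp v d, (rB d false \in v, rB d true \in v)).
Definition c0 : ({set xatomT} * (bool * bool))%type := (set0, (false, false)).

Definition Kv (P : {set gatomT}) (v : {set RA}) : Prop :=
  gp v = P /\ forall d, cell v d = c0.
Definition Anyv (m : bool * bool) (T : {set xatomT}) (v : {set RA}) : Prop :=
  gp v = set0 /\ forall d, cell v d = c0 \/ (cell v d = (T, m) /\ d \notin xvals).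
Definition Onev m T v : Prop :=
  Anyv m T v /\ #|[set d | (d \notin xvals) && (cell v d == (T, m))]| = 1.

Definition icell (I : IT) d :=
  ([set t | av I (loc (rX d t))], (I.1 (inr false, d), I.1 (inr true, d))).

Lemma cell_view I d : cell (view I) d = if d \in xvals then c0 else icell I d.
Proof.
rewrite /cell /icell /xp; case: ifP => H.
- congr (_, (_, _)); [apply/setP=> t|..]; by rewrite !inE /= H.
- congr (_, (_, _)); [apply/setP=> t|..]; by rewrite !inE /= H.
Qed.

Lemma gp_view I : gp (view I) = [set g | av I (loc (rG g))].
Proof. by apply/setP => g; rewrite !inE. Qed.

Lemma gccatE I P : sat I s (gccat xs P) = (gp (view I) == P).
Proof.
rewrite /gccat bigAndE all_cat !all_map gp_view -all_enum_set.
rewrite [X in _ && X](_ : _ = true); last first.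
  apply/allP => ij _ /=; rewrite litE /=.
  have := inj_eq hinj ij.1 ij.2; rewrite /xv => ->; by rewrite eqxx.
rewrite andbT -enumT; apply: eq_all => t /=; by rewrite litE gatomE.
Qed.

Lemma all_flatten_map (T S : Type) (a : pred S) (f : T -> seq S) l :
  all a (flatten (map f l)) = all (fun i => all a (f i)) l.
Proof. by elim: l => //= i l IH; rewrite all_cat IH. Qed.

Lemma deltaE I d : sat I (upd s x d) (delta A Bn xs x) = (d \notin xvals).
Proof.
rewrite /delta bigAndE all_map.
apply/allP/idP.
- move=> H; apply/imsetP => [[i _ E]]. have := H i (mem_enum _ i).
  by rewrite /= upd_x upd_xs E eqxx.
- move=> H i _ /=; rewrite upd_x upd_xs; apply/eqP => E; apply: (negP H); apply/imsetP; by exists i.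
Qed.

Lemma extfE I d T : sat I (upd s x d) (extf xs x T) =
   ([set t | av I (loc (rX d t))] == T) && (d \notin xvals).
Proof.
rewrite /extf bigAndE all_cat all_map /= upd_x eqxx /= all_flatten_map.
congr andb.
  rewrite -all_enum_set; apply: eq_all => t /=; by rewrite litE xatomE.
apply/allP/idP.
- move=> H; apply/imsetP => [[i _ E]]. have := H i (mem_enum _ i).
  by rewrite /= upd_x upd_xs E eqxx.
- move=> H i _ /=; rewrite upd_x upd_xs andbT.
  have E : d != xv i by apply/eqP => E; apply: (negP H); apply/imsetP; exists i.
  by rewrite E eq_sym E.
Qed.

Lemma MarkE I d m : sat I (upd s x d) (Mark A Bn x m) = ((I.1 (inr false, d), I.1 (inr true, d)) == m).
Proof. case: m => b1 b2; by rewrite /Mark /= !litE /= upd_x xpair_eqE. Qed.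

Lemma extMarkE I d T m : sat I (upd s x d) (extf xs x T) && sat I (upd s x d) (Mark A Bn x m) =
   (icell I d == (T, m)) && (d \notin xvals).
Proof.
rewrite extfE MarkE; case: m => b1 b2; rewrite /icell !xpair_eqE.
by case: (_ == T); case: (_ \in _); case: (_ == b1); case: (_ == b2).
Qed.

Lemma E0E : E0 A Bn xs = gccat xs set0. Proof. by []. Qed.
Lemma emptyxE : emptyx A Bn xs x = extf xs x set0. Proof. by []. Qed.
Opaque Mark extf delta emptyx gccat E0.

Lemma AnyfE I m T : sat I s (Anyf xs x m T) <-> Anyv m T (view I).
Proof.
rewrite /Anyf /= E0E gccatE emptyxE; split.
- case/andP => /eqP Hg /forallP H; split => // d. rewrite cell_view; case: ifP => Hd; [by left|].
  move: (H d); rewrite /= deltaE !extMarkE Hd /= !andbT; case/orP => /eqP ->; [right; split => //; by rewrite Hd | by left].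
- case=> Hg H; apply/andP; split; first by apply/eqP.
  apply/forallP => d /=; rewrite deltaE !extMarkE; apply/implyP => Hd; move: (H d); rewrite cell_view (negbTE Hd).
  case=> [->|[-> _]]; by rewrite eqxx ?orbT.
Qed.

Lemma KfE I P : sat I s (Kf xs x P) <-> Kv P (view I).
Proof.
rewrite /Kf /= emptyxE; split.
- case/andP; rewrite gccatE => /eqP Hg /forallP H; split => // d. rewrite cell_view; case: ifP => Hd //.
  move: (H d); rewrite /= deltaE extMarkE Hd /= andbT; by move/eqP.
- case=> Hg H; apply/andP; split; first by rewrite gccatE; apply/eqP.
  apply/forallP => d /=; rewrite deltaE extMarkE; apply/implyP => Hd; move: (H d); rewrite cell_view (negbTE Hd).
  by move=> ->; rewrite eqxx.
Qed.

Lemma OnefE I m T : sat I s (Onef xs x m T) <-> Onev m T (view I).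
Proof.
rewrite /Onef /Onev; move: (AnyfE I m T) => /= HA.
have -> : [set d | sat I (upd s x d) (FAnd (delta A Bn xs x) (FAnd (extf xs x T) (Mark A Bn x m)))]
   = [set d | (d \notin xvals) && (cell (view I) d == (T, m))].
  apply/setP => d; rewrite !inE /= deltaE -/(sat _ _ (FAnd _ _)) extMarkE cell_view.
  by case: (d \in xvals) => //=; rewrite andbT.
split.
- by case/andP => /HA ? /eqP.
- by case=> /HA -> ->.
Qed.

Definition vpred := {set RA} -> Prop.
Implicit Types (v w : {set RA}) (I : IT) (T : {set xatomT}).
Definition vstar (P Q : vpred) : vpred :=
  fun v => exists v1 : {set RA}, v1 \subset v /\ P v1 /\ Q (v :\: v1).
Definition emp : vpred := fun v => v = set0.

Ltac ssolve := let r := fresh "r" in apply/setP => r; rewrite ?inE;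
  repeat match goal with H : is_true (_ \subset _) |- _ => move: (subsetP H r) => /implyP; clear H end;
  rewrite ?inE; repeat (case: (r \in _)); by [].

Lemma vstar_mono (P P' Q Q' : vpred) v : (forall w, P w -> P' w) -> (forall w, Q w -> Q' w) ->
  vstar P Q v -> vstar P' Q' v.
Proof. move=> H1 H2 [v1 [S [HP HQ]]]; exists v1; split => //; split; auto. Qed.

Lemma vstar_comm (P Q : vpred) v : vstar P Q v -> vstar Q P v.
Proof.
move=> [v1 [S [HP HQ]]]; exists (v :\: v1); split; first exact: subsetDl.
split => //; suff -> : v :\: (v :\: v1) = v1 by [].
ssolve.
Qed.

Lemma vstar_assoc1 (P Q R : vpred) v : vstar (vstar P Q) R v -> vstar P (vstar Q R) v.
Proof.
move=> [v1 [S1 [[v2 [S2 [HP HQ]]] HR]]]; exists v2; split; first exact: subset_trans S2 S1.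
split => //; exists (v1 :\: v2); split; first by apply/subsetP => r; rewrite !inE; move: (subsetP S1 r); case: (r \in v2); case: (r \in v1) => //= ->.
split => //; suff -> : (v :\: v2) :\: (v1 :\: v2) = v :\: v1 by [].
ssolve.
Qed.

Lemma vstar_assoc2 (P Q R : vpred) v : vstar P (vstar Q R) v -> vstar (vstar P Q) R v.
Proof.
move=> [v1 [S1 [HP [w [S2 [HQ HR]]]]]]; exists (v1 :|: w); split.
  apply/subsetP => r; rewrite !inE; move: (subsetP S1 r) (subsetP S2 r); rewrite !inE.
  by case: (r \in v1); case: (r \in w); case: (r \in v) => //= _ /(_ isT).
split; last by suff -> : v :\: (v1 :|: w) = (v :\: v1) :\: w by []; ssolve.
exists v1; split; first exact: subsetUl.
split => //; suff -> : (v1 :|: w) :\: v1 = w by [].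
ssolve.
Qed.

Lemma vstar_emp (P : vpred) v : vstar P emp v <-> P v.
Proof.
split.
- move=> [v1 [S [HP HE]]]; suff <- : v1 = v by [].
  apply/setP => r; move/setP: HE => /(_ r); move: (subsetP S r); rewrite !inE.
  by case: (r \in v1); case: (r \in v) => //= /(_ isT).
- move=> HP; exists v; split => //; split => //; by rewrite setDv.
Qed.

Lemma vstar_swap (P Q R : vpred) v : vstar P (vstar Q R) v -> vstar Q (vstar P R) v.
Proof.
move=> H; apply: vstar_assoc1; apply: vstar_mono (vstar_assoc2 H) => // w; exact: vstar_comm.
Qed.

Lemma Kv0 v : Kv set0 v <-> v = set0.
Proof.
split.
- case=> Hg Hc; apply/setP => r; rewrite inE; apply/negbTE.
  case: r => [g|[d [t|b]]].
  + have: g \in gp v = (rG g \in v) by rewrite inE.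
    by rewrite Hg inE => <-.
  + have := f_equal fst (Hc d); rewrite /= => /setP /(_ t); rewrite !inE; by move/negbT.
  + have := f_equal snd (Hc d); rewrite /= => [[H1 H2]]; case: b; [exact: negbT H2|exact: negbT H1].
- move=> ->; split; first by apply/setP => g; rewrite !inE.
  move=> d; rewrite /cell /c0 !inE; congr pair; apply/setP => t; by rewrite !inE.
Qed.

Lemma vstar_GE (P : vpred) v : vstar (Kv set0) P v <-> P v.
Proof.
split.
- move=> [v1 [S [/Kv0 -> HP]]]; by rewrite setD0 in HP.
- move=> HP; exists set0; split; first exact: sub0set.
  split; first by apply/Kv0. by rewrite setD0.
Qed.

Definition den (g : fm) (P : vpred) := forall I : IT, sat I s g <-> P (view I).

Lemma den_ext g P Q : den g P -> (forall v, P v <-> Q v) -> den g Q.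
Proof. move=> H E I; split => [/H/E|/E/H] //. Qed.

Lemma split_av (I I1 I2 : IT) : split2 I I1 I2 ->
  forall p, av I p = av I1 p || av I2 p /\ ~~ (av I1 p && av I2 p).
Proof.
case/andP => /forallP H1 /forallP H2 [p|p] /=.
- by case/andP: (H1 p) => /eqP -> ->.
- by case/andP: (H2 p) => /eqP -> ->.
Qed.

Definition selp (v1 : {set RA}) (p : ((U * D) + (Bn * D * D))%type) : bool :=
  [exists r, (r \in v1) && (loc r == p)].
Definition restr (I : IT) (q : pred ((U * D) + (Bn * D * D))%type) : IT :=
  ([ffun p => I.1 p && q (inl p)], [ffun p => I.2 p && q (inr p)]).

Lemma av_restr I q p : av (restr I q) p = av I p && q p.
Proof. by case: p => p /=; rewrite ffunE. Qed.

Lemma split_restr I q : split2 I (restr I q) (restr I (predC q)).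
Proof.
apply/andP; split; apply/forallP => p; rewrite /= !ffunE /=;
  by case: (I.1 p) || case: (I.2 p); case: (q _).
Qed.

Lemma selp_loc (I : IT) (v1 : {set RA}) (r : RA) : v1 \subset view I -> validr r -> selp v1 (loc r) = (r \in v1).
Proof.
move=> S V; apply/existsP/idP.
- case=> r' /andP [H /eqP E]; move: (subsetP S r' H); rewrite inE => /andP [V' _].
  by rewrite -(loc_inj V' V E).
- by move=> H; exists r; rewrite H eqxx.
Qed.

Lemma view_restr (I : IT) (v1 : {set RA}) : v1 \subset view I ->
  view (restr I (selp v1)) = v1 /\ view (restr I (predC (selp v1))) = view I :\: v1.
Proof.
move=> S; split; apply/setP => r; rewrite !inE av_restr.
- case V: (validr r) => /=; last first.
    by apply/esym/negbTE/negP => /(subsetP S); rewrite inE V.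
  rewrite (selp_loc S) //; case H: (r \in v1); rewrite ?andbF ?andbT //.
  by move: (subsetP S r H); rewrite inE V.
- case V: (validr r) => /=; last by rewrite andbF. have := selp_loc S V; rewrite /= => ->; by rewrite andbC.
Qed.

Lemma den_star g h P Q : den g P -> den h Q -> den (FStar g h) (vstar P Q).
Proof.
move=> Hg Hh I; split.
- case/existsP => I1 /existsP [I2 /and3P [Hs H1 H2]]; have Hav := split_av Hs.
  exists (view I1); split; [|split].
  + apply/subsetP => r; rewrite !inE; case/andP => -> /=; rewrite (proj1 (Hav _)) => ->; by [].
  + by apply/Hg.
  + have -> : view I :\: view I1 = view I2.
      apply/setP=> r; rewrite !inE; case: (validr r) => //=; case: (Hav (loc r)) => ->.
      by case: (av I1 _); case: (av I2 _).
    by apply/Hh.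
- case=> v1 [Hsub [HP HQ]]; have [E1 E2] := view_restr Hsub.
  apply/existsP; exists (restr I (selp v1)); apply/existsP; exists (restr I (predC (selp v1))).
  rewrite split_restr /=; apply/andP; split; [apply/Hg; by rewrite E1 | apply/Hh; by rewrite E2].
Qed.

Definition selF (sg : pred gatomT) (st : pred xatomT) (sb : pred bool) (r : RA) : bool :=
  match r with inl g => sg g | inr (_, inl t) => st t | inr (_, inr b) => sb b end.

Lemma cell_sel v sg st sb d : cell [set r in v | selF sg st sb r] d =
  let: (X, (b1, b2)) := cell v d in ([set t in X | st t], (b1 && sb false, b2 && sb true)).
Proof.
rewrite /cell /xp !inE /=; congr pair; apply/setP => t; by rewrite !inE.
Qed.

Lemma gp_sel v sg st sb : gp [set r in v | selF sg st sb r] = [set g in gp v | sg g].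
Proof. apply/setP => g; by rewrite !inE. Qed.

Lemma setD_sel v sg st sb : v :\: [set r in v | selF sg st sb r] =
   [set r in v | selF (predC sg) (predC st) (predC sb) r].
Proof. apply/setP => r; rewrite !inE; case: r => [g|[d [t|b]]] /=; by case: (_ \in v); rewrite ?andbF ?andbT. Qed.

Lemma sub_sel v f : [set r in v | f r] \subset v.
Proof. apply/subsetP => r; by rewrite inE => /andP []. Qed.


Lemma split12 v (T1 T2 : {set xatomT}) : [disjoint T1 & T2] -> Anyv m12 (T1 :|: T2) v ->
  let v1 := [set r in v | selF pred0 (mem T1) (fun b => ~~ b) r] in
  v1 \subset v /\ forall d,
   (cell v d = c0 /\ cell v1 d = c0 /\ cell (v :\: v1) d = c0) \/
   (cell v d = (T1 :|: T2, m12) /\ cell v1 d = (T1, m1) /\ cell (v :\: v1) d = (T2, m2) /\ d \notin xvals).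
Proof.
move=> Hdis [Hg Hc] v1; split; first exact: sub_sel.
move=> d; rewrite /v1 setD_sel !cell_sel.
case: (Hc d) => [->|[-> Hd]]; [left|right]; rewrite /c0 /m12 /m1 /m2 /=.
- split => //; split; congr pair; apply/setP => t; by rewrite !inE.
- split => //; split; [|split => //]; congr pair; apply/setP => t; rewrite !inE;
  have := @disjointFr _ _ _ t Hdis; case: (t \in T1); case: (t \in T2) => //= /(_ isT) H; discriminate H.
Qed.

Lemma L2 v (T1 T2 : {set xatomT}) : [disjoint T1 & T2] -> Anyv m12 (T1 :|: T2) v ->
  vstar (Anyv m1 T1) (Anyv m2 T2) v.
Proof.
move=> Hdis HA; have [Hg _] := HA; have [S Hc] := split12 Hdis HA.
eexists; split; first exact: S.
split; split.
- by rewrite gp_sel Hg; apply/setP => g; rewrite !inE.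
- move=> d; case: (Hc d) => [[_ [-> _]]|[_ [-> [_ ->]]]]; by [left | right].
- by rewrite setD_sel gp_sel Hg; apply/setP => g; rewrite !inE.
- move=> d; case: (Hc d) => [[_ [_ ->]]|[_ [_ [-> ->]]]]; by [left | right].
Qed.

Lemma card_cell_eq v v' T m T' m' :
  (forall d, (cell v d = (T, m)) <-> (cell v' d = (T', m'))) ->
  [set d | (d \notin xvals) && (cell v d == (T, m))] = [set d | (d \notin xvals) && (cell v' d == (T', m'))].
Proof.
move=> H; apply/setP => d; rewrite !inE; congr andb.
by apply/eqP/eqP => /H.
Qed.

Lemma L1 v (T1 T2 : {set xatomT}) : [disjoint T1 & T2] -> Onev m12 (T1 :|: T2) v ->
  vstar (Onev m1 T1) (Onev m2 T2) v.
Proof.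
move=> Hdis [HA Hcard]; have [Hg _] := HA; have [S Hc] := split12 Hdis HA.
eexists; split; first exact: S.
split; split; [split| |split|].
- by rewrite gp_sel Hg; apply/setP => g; rewrite !inE.
- move=> d; case: (Hc d) => [[_ [-> _]]|[_ [-> [_ ->]]]]; by [left | right].
- rewrite -Hcard (@card_cell_eq _ v _ _ (T1 :|: T2) m12) // => d.
  case: (Hc d) => [[-> [-> _]]|[-> [-> _]]] //.
- by rewrite setD_sel gp_sel Hg; apply/setP => g; rewrite !inE.
- move=> d; case: (Hc d) => [[_ [_ ->]]|[_ [_ [-> ->]]]]; by [left | right].
- rewrite -Hcard (@card_cell_eq _ v _ _ (T1 :|: T2) m12) // => d.
  case: (Hc d) => [[-> [_ ->]]|[-> [_ [-> _]]]] //.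
Qed.

Definition cu (c c' : ({set xatomT} * (bool * bool))%type) :=
  let: (X, (a, b)) := c in let: (Y, (a', b')) := c' in (X :|: Y, (a || a', b || b')).

Lemma cell_union v w d : w \subset v -> cell v d = cu (cell w d) (cell (v :\: w) d).
Proof.
move=> S; rewrite /cell /cu /xp /=; congr (_, (_, _)).
- apply/setP => t; rewrite !inE; move: (subsetP S (rX d t)).
  by case: (rX d t \in w); case: (rX d t \in v) => // /(_ isT).
- rewrite !inE; move: (subsetP S (rB d false)).
  by case: (rB d false \in w); case: (rB d false \in v) => // /(_ isT).
- rewrite !inE; move: (subsetP S (rB d true)).
  by case: (rB d true \in w); case: (rB d true \in v) => // /(_ isT).
Qed.

Lemma gp_union v w : w \subset v -> gp v = gp w :|: gp (v :\: w).
Proof. move=> S; apply/setP => g; rewrite !inE; move: (subsetP S (rG g)); by case: (rG g \in w); case: (rG g \in v) => // /(_ isT). Qed.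

Lemma L3 m T v : vstar (Anyv m T) (Anyv m T) v -> Anyv m T v.
Proof.
case: m => b1 b2; move=> [w [S [[Hg1 Hc1] [Hg2 Hc2]]]]; split; first by rewrite (gp_union S) Hg1 Hg2 setU0.
move=> d; rewrite (cell_union d S).
case: (Hc1 d) => [->|[-> Hd]]; case: (Hc2 d) => [->|[-> Hd']]; rewrite /cu /c0 /=.
- by left; rewrite setU0.
- by right; rewrite set0U.
- by right; rewrite setU0 !orbF.
- by right; rewrite setUid !orbb.
Qed.

Lemma Any_set0 m T : Anyv m T set0.
Proof.
split; first by apply/setP => g; rewrite !inE.
move=> d; left; rewrite /cell /c0 !inE; congr pair; apply/setP => t; by rewrite !inE.
Qed.

Lemma L4 m T v : Anyv m T v -> vstar (Anyv m T) (Anyv m T) v.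
Proof. move=> H; exists v; split => //; split => //; rewrite setDv; exact: Any_set0. Qed.

Lemma L5 m T v : Onev m T v -> Anyv m T v.
Proof. by case. Qed.

Lemma L6 m T v : Kv set0 v -> Anyv m T v.
Proof. case=> Hg Hc; split => // d; by left. Qed.

Lemma L7 (P1 P2 : {set gatomT}) v : [disjoint P1 & P2] -> Kv (P1 :|: P2) v -> vstar (Kv P1) (Kv P2) v.
Proof.
move=> Hdis [Hg Hc]; exists [set r in v | selF (mem P1) pred0 pred0 r]; split; first exact: sub_sel.
have Hc0 sg st sb d : cell [set r in v | selF sg st sb r] d = c0.
  rewrite cell_sel Hc /c0 /=; congr pair; apply/setP => t; by rewrite !inE.
split; split.
- rewrite gp_sel Hg; apply/setP => g; rewrite !inE; by case: (_ \in P1); case: (_ \in P2).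
- by move=> d; rewrite Hc0.
- rewrite setD_sel gp_sel Hg; apply/setP => g; rewrite !inE.
  have := @disjointFr _ _ _ g Hdis; case: (g \in P1); case: (g \in P2) => //= /(_ isT) H; discriminate H.
- by move=> d; rewrite setD_sel Hc0.
Qed.


Definition dSat (a : satom A Bn n) : vpred :=
  match a with SOne m T => Onev m T | SAny m T => Anyv m T | SGE => Kv set0 end.
Definition Vl (l : seq (satom A Bn n)) : vpred := foldr (fun a acc => vstar (dSat a) acc) emp l.

Lemma Vl_cat_mono l X Y v : (forall w, Vl X w -> Vl Y w) -> Vl (l ++ X) v -> Vl (l ++ Y) v.
Proof.
elim: l v => [|a l IH] v H /=; first exact: H.
apply: vstar_mono => // w; exact: IH.
Qed.

Lemma Vl_cat1 l l' v : Vl (l ++ l') v -> vstar (Vl l) (Vl l') v.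
Proof.
elim: l v => [|a l IH] v /=.
- move=> H; apply: vstar_comm; by apply/vstar_emp.
- move=> H; apply: vstar_assoc2; apply: vstar_mono H => // w; exact: IH.
Qed.

Lemma Vl_cat2 l l' v : vstar (Vl l) (Vl l') v -> Vl (l ++ l') v.
Proof.
elim: l v => [|a l IH] v /=.
- move=> H; apply/vstar_emp; exact: vstar_comm.
- move=> H; apply: vstar_mono (vstar_assoc1 H) => // w; exact: IH.
Qed.

Lemma mono1 (P P' Q : vpred) v : vstar P Q v -> (forall w, P w -> P' w) -> vstar P' Q v.
Proof. move=> H f; exact: vstar_mono f (fun _ h => h) H. Qed.
Lemma mono2 (P Q Q' : vpred) v : vstar P Q v -> (forall w, Q w -> Q' w) -> vstar P Q' v.
Proof. move=> H f; exact: vstar_mono (fun _ h => h) f H. Qed.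

Lemma mergeOA m T (Q : vpred) v : vstar (Onev m T) (vstar (Anyv m T) Q) v -> vstar (Anyv m T) Q v.
Proof. move=> H; refine (mono1 (vstar_assoc2 H) _) => w H'; apply: L3; refine (mono1 H' _) => u; exact: L5. Qed.
Lemma mergeAO m T (Q : vpred) v : vstar (Anyv m T) (vstar (Onev m T) Q) v -> vstar (Anyv m T) Q v.
Proof. move=> H; refine (mono1 (vstar_assoc2 H) _) => w H'; apply: L3; refine (mono2 H' _) => u; exact: L5. Qed.
Lemma mergeAA m T (Q : vpred) v : vstar (Anyv m T) (vstar (Anyv m T) Q) v -> vstar (Anyv m T) Q v.
Proof. move=> H; refine (mono1 (vstar_assoc2 H) _) => w; exact: L3. Qed.

Lemma rule14_sound lhs rhs r v : rule14 lhs rhs -> Vl (rhs ++ r) v -> Vl (lhs ++ r) v.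
Proof.
case=> T1 [T2 [Hdis [[-> ->]|[[-> ->]|[[-> ->]|[-> ->]]]]]] /= H.
- apply: vstar_assoc1; refine (mono1 H _) => w; exact: L1.
- have H1 := vstar_assoc1 (mono1 H (fun w => @L1 w _ _ Hdis)).
  refine (mono2 H1 _) => w; exact: mergeOA.
- apply: mergeAO; refine (mono2 H _) => w H'.
  apply: vstar_assoc1; refine (mono1 H' _) => u; exact: L1.
- have H1 : vstar (Anyv m1 T1) (vstar (Anyv m2 T2) (vstar (Anyv m1 T1) (vstar (Anyv m2 T2) (Vl r)))) v.
    refine (mono2 H _) => w H'; refine (mono2 H' _) => u H''; apply: vstar_assoc1; refine (mono1 H'' _) => z; exact: L2.
  apply: mergeAA; refine (mono2 H1 _) => w H'; apply: vstar_swap; apply: mergeAA; refine (mono2 H' _) => u; exact: vstar_swap.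
Qed.

Lemma rule56_sound lhs rhs r v : rule56 lhs rhs -> Vl (rhs ++ r) v -> Vl (lhs ++ r) v.
Proof. case=> T [[->|->] ->] /= H; refine (mono1 H _) => w; exact: L6. Qed.

Lemma equiv_sound l l' v : equiv_step l l' -> Vl l' v -> Vl l v.
Proof.
case=> [[l1 [a [b [l2 [-> ->]]]]]|[->|[->|[[m [T [r [-> ->]]]]|[m [T [r [-> ->]]]]]]]] /= H.
- apply: Vl_cat_mono H => w /=; exact: vstar_swap.
- by apply/vstar_GE.
- by apply/vstar_GE.
- exact: mergeAA.
- apply: vstar_assoc1; refine (mono1 H _) => w; exact: L4.
Qed.

Lemma rtc_sound (Rel : seq (satom A Bn n) -> seq (satom A Bn n) -> Prop) :
  (forall l l' v, Rel l l' -> Vl l' v -> Vl l v) ->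
  forall l1 l2, rtc Rel l1 l2 -> forall v, Vl l2 v -> Vl l1 v.
Proof. move=> HR l1 l2; elim => //= a b c Hab _ IH v H; apply: HR Hab _; exact: IH. Qed.

Lemma GE_Kf : GE A Bn xs x = Kf xs x set0.
Proof. by rewrite /GE /Kf E0E. Qed.

Definition den_One m T : den (Onef xs x m T) (Onev m T) := fun I => OnefE I m T.
Definition den_Any m T : den (Anyf xs x m T) (Anyv m T) := fun I => AnyfE I m T.
Definition den_Kf P : den (Kf xs x P) (Kv P) := fun I => KfE I P.

Lemma den_emp g P : den g P -> den g (vstar P emp).
Proof. move=> H; refine (den_ext H _) => v; split => [H0|/vstar_emp //]; by apply/vstar_emp. Qed.

Lemma den_foldl (T : Type) (f : T -> fm) (sub : T -> seq (satom A Bn n)) l g P :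
  (forall a, den (f a) (Vl (sub a))) -> den g P ->
  den (foldl (fun acc a => FStar acc (f a)) g l) (vstar P (Vl (flatten (map sub l)))).
Proof.
move=> Hf; elim: l g P => [|a l IH] g P Hg /=; first exact: den_emp.
refine (den_ext (IH _ _ (den_star Hg (Hf a))) _) => v; split => H.
- refine (mono2 (vstar_assoc1 H) _) => w H'; exact: Vl_cat2.
- apply: vstar_assoc2; refine (mono2 H _) => w H'; exact: Vl_cat1.
Qed.

Lemma den_Xn m T k : den (Xn xs x m T k) (Vl (nseq k (SOne m T) ++ [:: @SGE A Bn n])).
Proof.
elim: k => [|k IH] /=.
- rewrite GE_Kf; exact: den_emp (den_Kf set0).
- exact: den_star (den_One m T) IH.
Qed.

Lemma Vl_GE l v : Vl (l ++ [:: @SGE A Bn n]) v <-> Vl l v.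
Proof.
split => H.
- have := Vl_cat1 H => H'; apply/vstar_emp; refine (mono2 H' _) => w /= /vstar_GE //.
- apply: Vl_cat2; move/vstar_emp: H => H; refine (mono2 H _) => w Hw /=; by apply/vstar_GE.
Qed.

Lemma Vl_GEAny l m T v : Vl (l ++ [:: @SGE A Bn n; SAny m T]) v <-> vstar (Vl l) (Anyv m T) v.
Proof.
split => H.
- have := Vl_cat1 H => H'; refine (mono2 H' _) => w /= /vstar_GE /vstar_emp //.
- apply: Vl_cat2; refine (mono2 H _) => w Hw /=; apply/vstar_GE; by apply/vstar_emp.
Qed.

Lemma den_Xf m T c : den (Xf xs x m T c) (Vl (unfoldX m T c)).
Proof.
case: c => [k|p] /=; first exact: den_Xn.
refine (den_ext (den_star (den_Xn m T p) (den_Any m T)) _) => v.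
split => H.
- apply/Vl_GEAny; refine (mono1 H _) => w /Vl_GE //.
- move/Vl_GEAny: H => H; refine (mono1 H _) => w Hw; by apply/Vl_GE.
Qed.

Lemma den_satom a : den (satom_form xs x a) (Vl [:: a]).
Proof.
case: a => [m T|m T|] /=; apply: den_emp; [exact: den_One|exact: den_Any|].
rewrite GE_Kf; exact: den_Kf.
Qed.

Definition Eb (E : seq (nat * 'I_n)) := all (fun p => s p.1 == s (tnth xs p.2)) E.

Lemma EformE I E : sat I s (Eform A Bn xs E) = Eb E.
Proof. by rewrite /Eform bigAndE all_map. Qed.

Lemma den_E E g P : den g P -> den (FAnd (Eform A Bn xs E) g) (fun v => Eb E /\ P v).
Proof. move=> H I /=; rewrite EformE; split => [/andP [-> /H] //|[-> /H ->] //]. Qed.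

Lemma den_Sf m E P (c : {ffun {set xatomT} -> cval}) :
  den (Sf xs x m E P c) (fun v => Eb E /\ vstar (Kv P) (Vl (flatten [seq unfoldX m T (c T) | T <- enum {set xatomT}])) v).
Proof.
rewrite /Sf; apply: den_E; rewrite foldl_mapF; apply: den_foldl; last exact: den_Kf.
move=> T; exact: den_Xf.
Qed.

Lemma main_view (P1 P2 : {set gatomT}) (s1 s2 : {ffun {set xatomT} -> cval}) (W1 W2 : seq (satom A Bn n)) v :
  [disjoint P1 & P2] ->
  rtc (fun l l' => equiv_step l l' \/ rewr (@rule14 A Bn n) l l') (W0 s1 s2) W1 ->
  rtc (fun l l' => equiv_step l l' \/ rewr (@rule56 A Bn n) l l') W1 W2 ->
  vstar (Kv (P1 :|: P2)) (Vl W2) v ->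
  vstar (vstar (Kv P1) (Vl (flatten [seq unfoldX m1 T (s1 T) | T <- enum {set xatomT}])))
        (vstar (Kv P2) (Vl (flatten [seq unfoldX m2 T (s2 T) | T <- enum {set xatomT}]))) v.
Proof.
move=> Hd H1 H2 H.
have S2 : forall w, Vl W2 w -> Vl W1 w.
  apply: (rtc_sound _ H2) => l l' v' [E|[lhs [rhs [r [Hr [-> ->]]]]]].
  - exact: equiv_sound E.
  - exact: rule56_sound Hr.
have S1 : forall w, Vl W1 w -> Vl (W0 s1 s2) w.
  apply: (rtc_sound _ H1) => l l' v' [E|[lhs [rhs [r [Hr [-> ->]]]]]].
  - exact: equiv_sound E.
  - exact: rule14_sound Hr.
have H' := mono2 H (fun w h => S1 w (S2 w h)).
rewrite /W0 in H'.
have H3 := mono1 (mono2 H' (fun w h => Vl_cat1 h)) (fun w h => @L7 _ _ w Hd h).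
apply: vstar_assoc2; refine (mono2 (vstar_assoc1 H3) _) => w Hw; exact: vstar_swap.
Qed.

Lemma final_sat E (P1 P2 : {set gatomT}) (s1 s2 : {ffun {set xatomT} -> cval}) (W1 W2 : seq (satom A Bn n)) I :
  [disjoint P1 & P2] ->
  rtc (fun l l' => equiv_step l l' \/ rewr (@rule14 A Bn n) l l') (W0 s1 s2) W1 ->
  rtc (fun l l' => equiv_step l l' \/ rewr (@rule56 A Bn n) l l') W1 W2 ->
  sat I s (FAnd (Eform A Bn xs E) (foldl (fun acc a => FStar acc (satom_form xs x a)) (Kf xs x (P1 :|: P2)) W2)) ->
  sat I s (FStar (Sf xs x (true, false) E P1 s1) (Sf xs x (false, true) E P2 s2)).
Proof.
move=> Hd H1 H2.
have D1 := den_E E (den_foldl W2 den_satom (den_Kf (P1 :|: P2))).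
move/D1 => [HE HV]; rewrite flatten_map1 map_id in HV.
apply/(den_star (den_Sf _ _ _ _) (den_Sf _ _ _ _)).
have H := main_view Hd H1 H2 HV.
refine (mono1 (mono2 H _) _) => w Hw; by split.
Qed.


End Inj.
End Proof.

Theorem lemma16 (A Bn : finType) (n : nat) (xs : n.-tuple nat) (x : nat)
  (E : seq (nat * 'I_n))
  (P1 P2 : {set gatom A Bn n}) (q1 q2 : nat)
  (s1 s2 : {ffun {set xatom A Bn n} -> cval}) (R : form (A + bool) Bn) :
  (* x_1..x_n, x distinct *)
  uniq xs -> x \notin xs ->
  (* y_j distinct and not among x, x_1..x_n *)
  uniq [seq p.1 | p <- E] -> (forall p, p \in E -> p.1 \notin x :: xs) ->
  (* counts of C_1 in C_{q1}, counts of C_2 in C_{q2} *)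
  2 <= q1 -> (forall T, in_Cq q1 (s1 T)) ->
  2 <= q2 -> (forall T, in_Cq q2 (s2 T)) ->
  derivation_result xs x E P1 s1 P2 s2 R ->
  valid (FImp R (FStar (Sf xs x (true, false) E P1 s1)
                       (Sf xs x (false, true) E P2 s2))).
Proof.
move=> _ hx _ _ _ _ _ _ [W1 [W2 [H1 [H2 [_ ->]]]]] D _ I s'.
apply/implyP => HR.
case/andP: (HR) => _ HF.
have [I' HK] := foldl_first HF.
move: HK HR; rewrite /otimes; case: ifP => Hd /= HK HR; last by [].
have hinj := gccat_inj (proj1 (andP HK)).
exact: (final_sat hx hinj Hd H1 H2 HR).
Qed.
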